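(* Let $R$ be a Galois ring of odd characteristic. Then every pure subgroup $K\le R^\times$ is strongly pure.
   Context: All rings have an identity. A finite local commutative ring $R$ with maximal ideal $\mathrm{rad}(R)$ and residue field of characteristic $p$ is a Galois ring if $\mathrm{rad}(R)=pR$. $K\le R^\times$ is pure if the only ideal $I$ of $R$ with $1+I\subseteq K$ is $\{0\}$. With $I_0=\{x\in\mathrm{rad}(R):x\,\mathrm{rad}(R)=\{0\}\}$ and $\pi_0:R\to R/I_0$ the natural epimorphism, $K$ is strongly pure if it is pure and, unless $R$ is a field, $\pi_0(K)$ is a strongly pure subgroup of $(R/I_0)^\times$ (recursive definition). *)

(* Defs.v *)
From HB Require Import structures.
From mathcomp Require Import all_boot all_order all_algebra.
Set Implicit Arguments. Unset Strict Implicit. Unset Printing Implicit Defensive.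
Import GRing.Theory.
Local Open Scope ring_scope.

(* Finite commutative rings with identity are modelled by finComUnitRingType
   (the units/inverse are computable, as always for finite rings). *)

Section RingNotions.
Variable R : finComUnitRingType.

Definition is_ideal (I : {set R}) : bool :=
  [&& 0 \in I,
      [forall x in I, forall y in I, x - y \in I] &
      [forall r, forall x in I, r * x \in I]].

Definition is_maximal_ideal (M : {set R}) : bool :=
  [&& is_ideal M, 1 \notin M &
      [forall J : {set R}, [&& is_ideal J, 1 \notin J & M \subset J] ==> (J == M)]].

Definition is_local_ring : Prop :=
  exists M, is_maximal_ideal M /\ forall M', is_maximal_ideal M' -> M' = M.

Definition rad : {set R} :=
  [set x | [forall M : {set R}, is_maximal_ideal M ==> (x \in M)]].

Definition has_char (c : nat) : Prop :=
  [/\ (0 < c)%N, c%:R = 0 :> R &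
      forall m, (0 < m)%N -> m%:R = 0 :> R -> (c <= m)%N].

(* R is a Galois ring: finite local, with rad(R) = pR where p is the
   characteristic of the residue field R/rad(R) (i.e. p prime with p%:R in rad R) *)
Definition is_galois_ring : Prop :=
  is_local_ring /\
  exists p, [/\ prime p, p%:R \in rad & rad = [set p%:R * x | x in R]].

Definition is_field : Prop := forall x : R, x != 0 -> x \is a GRing.unit.

Definition is_unit_subgroup (K : {set R}) : Prop :=
  [/\ K \subset [set x | x \is a GRing.unit], 1 \in K,
      (forall x y, x \in K -> y \in K -> x * y \in K) &
      (forall x, x \in K -> x^-1 \in K)].

Definition pure (K : {set R}) : Prop :=
  forall I, is_ideal I -> [set 1 + x | x in I] \subset K -> I = [set 0].

Definition I0 : {set R} :=
  [set x in rad | [forall y in rad, x * y == 0]].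

End RingNotions.

(* The quotient R/I_0 is represented, up to isomorphism, by any finite ring S
   with a surjective ring morphism pi_0 : R -> S whose kernel is I_0. *)
Inductive strongly_pure : forall R : finComUnitRingType, {set R} -> Prop :=
| StronglyPure (R : finComUnitRingType) (K : {set R}) :
    pure K ->
    (is_field R \/
     forall (S : finComUnitRingType) (pi0 : {rmorphism R -> S}),
       (forall s : S, exists r : R, pi0 r = s) ->
       (forall r : R, pi0 r = 0 <-> r \in I0 R) ->
       strongly_pure (pi0 @: K)) ->
    strongly_pure K.

(* Main.v *)
Require Import Defs.
From mathcomp Require Import all_boot all_order all_algebra.
From mathcomp Require Import ring.
Set Implicit Arguments. Unset Strict Implicit. Unset Printing Implicit Defensive.
Import GRing.Theory.
Local Open Scope ring_scope.


Section Basic.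
Variable R : finComUnitRingType.

Lemma idealP (I : {set R}) : reflect
  [/\ 0 \in I, forall x y, x \in I -> y \in I -> x - y \in I &
      forall r x, x \in I -> r * x \in I] (is_ideal I).
Proof.
apply: (iffP and3P) => [[H0 /forall_inP H1 /forallP H2]|[H0 H1 H2]]; split => //.
- by move=> x y xI yI; move/forall_inP: (H1 x xI); apply.
- by move=> r x xI; move/forall_inP: (H2 r); apply.
- by apply/forall_inP => x xI; apply/forall_inP => y yI; apply: H1.
- by apply/forallP => r; apply/forall_inP => x xI; apply: H2.
Qed.

Lemma ideal_nounit (I : {set R}) x : is_ideal I -> 1 \notin I -> x \in I ->
  x \isn't a GRing.unit.
Proof.
move=> /idealP [_ _ H2] n1 xI; apply/negP => xu.
by move/negP: n1; apply; rewrite -(mulVr xu); apply: H2.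
Qed.

Definition Pr (p : nat) : Prop :=
  [/\ prime p, odd p, (p%:R : R) \isn't a GRing.unit &
      forall x : R, x \is a GRing.unit \/ exists y, x = p%:R * y].

Lemma pR_ideal p : is_ideal [set p%:R * x | x in R].
Proof.
apply/idealP; split.
- by apply/imsetP; exists 0; rewrite ?mulr0.
- move=> x y /imsetP[a _ ->] /imsetP[b _ ->]; apply/imsetP; exists (a - b) => //.
  by rewrite mulrBr.
- move=> r x /imsetP[a _ ->]; apply/imsetP; exists (r * a) => //.
  by rewrite mulrCA.
Qed.

Lemma one_notin_pR p : (p%:R : R) \isn't a GRing.unit -> 1 \notin [set p%:R * x | x in R].
Proof.
move=> nu; apply/imsetP => -[y _ e]; move/negP: nu; apply.
by apply/unitrP; exists y; split; [rewrite mulrC -e | rewrite -e].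
Qed.

Lemma rad_P p : Pr p -> Defs.rad R = [set p%:R * x | x in R].
Proof.
move=> [_ _ nu hx].
have sub : forall J, is_ideal J -> 1 \notin J -> J \subset [set p%:R * x | x in R].
  move=> J iJ n1J; apply/subsetP => x xJ.
  case: (hx x) => [xu|[y ->]]; last by apply/imsetP; exists y.
  by move: (ideal_nounit iJ n1J xJ); rewrite xu.
have maxpR : is_maximal_ideal [set p%:R * x | x in R].
  apply/and3P; split; [exact: pR_ideal| exact: one_notin_pR|].
  apply/forallP => J; apply/implyP => /and3P[iJ n1J sJ].
  by rewrite eqEsubset sJ sub.
have allM : forall M, is_maximal_ideal M -> M = [set p%:R * x | x in R].
  move=> M /and3P[iM n1M /forallP mM].
  have := mM [set p%:R * x | x in R]; rewrite pR_ideal one_notin_pR //= sub //=.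
  by move/eqP.
apply/setP => x; rewrite /Defs.rad inE; apply/forallP/idP => [H|xp M].
  by move/implyP: (H [set p%:R * x | x in R]); apply.
by apply/implyP => /allM ->.
Qed.

Lemma I0_P p x : Pr p -> x \in Defs.I0 R <-> (exists y, x = p%:R * y) /\ p%:R * x = 0.
Proof.
move=> Pp; rewrite /Defs.I0 inE (rad_P Pp); split.
  move=> /andP[/imsetP[y _ ->] /forall_inP H]; split; first by exists y.
  have h1 : (p%:R : R) \in [set p%:R * x | x in R] by apply/imsetP; exists 1; rewrite ?mulr1.
  by have /eqP := H _ h1; rewrite mulrC.
move=> [[y ->] H]; apply/andP; split; first exact: imset_f.
by apply/forall_inP => z /imsetP[w _ ->]; rewrite mulrCA mulrA H mul0r.
Qed.

End Basic.

Lemma galois_P (R : finComUnitRingType) c :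
  is_galois_ring R -> has_char R c -> odd c -> exists p, Pr R p.
Proof.
move=> [[M [maxM uniqM]] [p [pp prad radE]]] [c0 cR _] oc.
have radM : forall x, x \in Defs.rad R -> x \in M.
  by move=> x; rewrite /Defs.rad inE => /forallP/(_ M)/implyP; apply.
have /and3P[iM n1M _] := maxM.
have nonunit_rad : forall x : R, x \isn't a GRing.unit -> x \in Defs.rad R.
  move=> x xn.
  pose P := fun I : {set R} => is_ideal I && (1 \notin I).
  have PC : P [set r * x | r in R].
    apply/andP; split.
      apply/idealP; split.
      - by apply/imsetP; exists 0; rewrite ?mul0r.
      - move=> a b /imsetP[u _ ->] /imsetP[v _ ->]; apply/imsetP; exists (u - v) => //.
        by rewrite mulrBl.
      - move=> r a /imsetP[u _ ->]; apply/imsetP; exists (r * u) => //.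
        by rewrite mulrA.
    apply/imsetP => -[y _ e]; move/negP: xn; apply.
    by apply/unitrP; exists y; split; [rewrite -e | rewrite mulrC -e].
  have [A /maxsetP [PA mA] sCA] := maxset_exists PC.
  have maxA : is_maximal_ideal A.
    case/andP: PA => iA n1A; apply/and3P; split => //.
    apply/forallP => J; apply/implyP => /and3P[iJ n1J sAJ].
    by apply/eqP; apply: mA => //; apply/andP.
  have xA : x \in A by apply: (subsetP sCA); apply/imsetP; exists 1; rewrite ?mul1r.
  rewrite /Defs.rad inE; apply/forallP => M'; apply/implyP => /uniqM ->.
  by rewrite -(uniqM _ maxA).
have pn : (p%:R : R) \isn't a GRing.unit by apply: ideal_nounit iM n1M (radM _ prad).
exists p; split => //.
- case: (even_prime pp) => // p2; subst p.
  exfalso; move/negP: n1M; apply.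
  have h2 : (2%:R : R) \in M by apply: radM.
  have e : (1 : R) = 0 - (c./2)%:R * 2%:R.
    have ec : (c = 1 + c./2 * 2)%N by rewrite -[c in LHS]odd_double_half oc -muln2.
    by rewrite -cR {1}ec natrD natrM addrK.
  by rewrite e; case/idealP: iM => H0 H1 H2; apply: H1 => //; apply: H2.
- move=> x; case xu: (x \is a GRing.unit); [by left | right].
  have := nonunit_rad x (negbT xu); rewrite radE => /imsetP[y _ ->].
  by exists y.
Qed.

Section Nilp.
Variables (R : finComUnitRingType) (p : nat).
Hypothesis Pp : Pr R p.
Local Notation q := (p%:R : R).

Lemma unit_1_sub d : (0 < d)%N -> 1 - q ^+ d \is a GRing.unit.
Proof.
case: d => // d _; case: Pp => _ _ nu hx.
case: (hx (1 - q ^+ d.+1)) => // -[y e]; exfalso; move/negP: nu; apply.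
apply/unitrP; exists (y + q ^+ d).
have e1 : q * (y + q ^+ d) = 1 by rewrite mulrDr -exprS -e subrK.
by split => //; rewrite mulrC.
Qed.

Lemma q_nilp : exists n, q ^+ n = 0.
Proof.
pose f := fun i : 'I_(#|R|.+1) => q ^+ i.
have : ~~ injectiveb f.
  by apply/negP => /injectiveP /leq_card; rewrite card_ord ltnn.
case/injectivePn => i [j nij e].
wlog lij : i j nij e / (i < j)%N.
  move=> W; case: (ltngtP i j) => [h|h|h]; first exact: (W i j).
  - by apply: (W j i) => //; rewrite eq_sym.
  - by move: nij; rewrite -val_eqE /= h eqxx.
exists i; rewrite /f in e.
have := @unit_1_sub (j - i) (ltac:(by rewrite subn_gt0)) => /unitrP[v [v1 _]].
have : q ^+ i * (1 - q ^+ (j - i)) = 0.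
  by rewrite mulrBr mulr1 -exprD subnKC ?(ltnW lij) // e subrr.
by move=> h; rewrite -[q ^+ i]mulr1 -{2}v1 mulrCA h mulr0.
Qed.

Lemma q_decomp m x : (exists k u, [/\ (k < m)%N, u \is a GRing.unit & x = q ^+ k * u])
  \/ exists y, x = q ^+ m * y.
Proof.
case: Pp => _ _ _ hx.
elim: m x => [|m IH] x; first by right; exists x; rewrite expr0 mul1r.
case: (IH x) => [[k [u [km uu e]]]|[y ->]].
  by left; exists k, u; split => //; apply: ltnW.
case: (hx y) => [yu|[z ->]].
  by left; exists m, y.
by right; exists z; rewrite exprSr mulrA.
Qed.

End Nilp.

Lemma aR_ideal (R : finComUnitRingType) (a : R) : is_ideal [set a * x | x in R].
Proof.
apply/idealP; split.
- by apply/imsetP; exists 0; rewrite ?mulr0.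
- move=> x y /imsetP[u _ ->] /imsetP[v _ ->]; apply/imsetP; exists (u - v) => //.
  by rewrite mulrBr.
- move=> r x /imsetP[u _ ->]; apply/imsetP; exists (r * u) => //.
  by rewrite mulrCA.
Qed.

Lemma binom_cube (R : comRingType) (b : R) m : b ^+ 3 = 0 ->
  (1 + b) ^+ m = 1 + m%:R * b + 'C(m, 2)%:R * b ^+ 2.
Proof.
move=> b3; elim: m => [|m IH]; first by rewrite expr0 mul0r bin0n mul0r !addr0.
have gen : forall (m C : R), (1 + m * b + C * b ^+ 2) * (1 + b) =
  1 + (1 + m) * b + (C + m) * b ^+ 2 + C * b ^+ 3 by move=> *; ring.
by rewrite exprSr IH gen b3 mulr0 addr0 binS bin1 natrD mulrSr; ring.
Qed.

Lemma exN (R : finComUnitRingType) p : Pr R p -> (p%:R : R) != 0 ->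
  exists M, (p%:R : R) ^+ M.+2 = 0 /\ (p%:R : R) ^+ M.+1 != 0.
Proof.
move=> Pp qnz.
have ex : exists n, (fun n => (p%:R : R) ^+ n == 0) n.
  by have [n e] := q_nilp Pp; exists n; apply/eqP.
case: (ex_minnP ex) => N /eqP qN minN.
case: N qN minN => [|[|M]] qN minN.
- by move: qN; rewrite expr0 => /eqP; rewrite oner_eq0.
- by move: qN; rewrite expr1 => /eqP; rewrite (negbTE qnz).
exists M; split => //; apply/negP => /minN; by rewrite ltnn.
Qed.

Section Image.
Variables (R S : finComUnitRingType) (pi0 : {rmorphism R -> S}) (p : nat).
Hypothesis surj : forall s : S, exists r : R, pi0 r = s.
Hypothesis ker : forall r : R, pi0 r = 0 <-> r \in Defs.I0 R.
Hypothesis Pp : Pr R p.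
Local Notation q := (p%:R : R).

Lemma ker_iff r : pi0 r = 0 <-> (exists y, r = q * y) /\ q * r = 0.
Proof. by rewrite ker; apply: I0_P. Qed.

Lemma P_image : Pr S p.
Proof.
case: Pp => pp op nu hx; split => //.
- apply/negP => /unitrP [y [e1 _]].
  have [r er] := surj y.
  have : pi0 (r * p%:R - 1) = 0.
    by rewrite rmorphB rmorphM rmorph_nat rmorph1 er e1 subrr.
  move/ker_iff => [[z ez] _].
  move/negP: nu; apply; apply/unitrP; exists (r - z).
  have e : q * (r - z) = 1.
    by rewrite mulrBr -ez; ring.
  by split => //; rewrite mulrC.
- move=> x; have [r <-] := surj x.
  case: (hx r) => [ru|[y ->]]; first by left; apply: rmorph_unit.
  by right; exists (pi0 y); rewrite rmorphM rmorph_nat.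
Qed.

Lemma usub_image K : is_unit_subgroup K -> is_unit_subgroup (pi0 @: K).
Proof.
case=> sK K1 KM KV; split.
- apply/subsetP => x /imsetP[k kK ->]; rewrite inE; apply: rmorph_unit.
  by move/subsetP: sK => /(_ k kK); rewrite inE.
- by apply/imsetP; exists 1 => //; rewrite rmorph1.
- move=> x y /imsetP[a aK ->] /imsetP[b bK ->]; apply/imsetP; exists (a * b).
    exact: KM.
  by rewrite rmorphM.
- move=> x /imsetP[a aK ->]; apply/imsetP; exists a^-1; first exact: KV.
  by rewrite rmorphV //; move/subsetP: sK => /(_ a aK); rewrite inE.
Qed.

Lemma card_image_lt : q != 0 -> (#|S| < #|R|)%N.
Proof.
move=> qnz; have [M [qM qM1]] := exN Pp qnz.
have k0 : pi0 (q ^+ M.+1) = 0.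
  apply/ker_iff; split; first by exists (q ^+ M); rewrite exprS.
  by rewrite -exprS.
have e : pi0 @: [set: R] = [set: S].
  by apply/setP => s; rewrite inE; have [r <-] := surj s; rewrite imset_f ?inE.
rewrite -[#|S|]cardsT -e.
rewrite -[#|R|]cardsT ltn_neqAle leq_imset_card andbT.
apply/negP => /imset_injP inj.
move/negP: qM1; apply; apply/eqP; apply: inj; rewrite ?inE //.
by rewrite k0 rmorph0.
Qed.

End Image.

Lemma usub_exp (R : finComUnitRingType) (K : {set R}) k n :
  is_unit_subgroup K -> k \in K -> k ^+ n \in K.
Proof.
case=> _ K1 KM _ kK; elim: n => [|n IH]; first by rewrite expr0.
by rewrite exprS; apply: KM.
Qed.

Section Pure.
Variables (R S : finComUnitRingType) (pi0 : {rmorphism R -> S}) (p : nat).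
Hypothesis surj : forall s : S, exists r : R, pi0 r = s.
Hypothesis ker : forall r : R, pi0 r = 0 <-> r \in Defs.I0 R.
Hypothesis Pp : Pr R p.
Local Notation q := (p%:R : R).

Lemma pure_image K : q != 0 -> is_unit_subgroup K -> pure K -> pure (pi0 @: K).
Proof.
move=> qnz uK pK J iJ sJ.
have [M [qM qM1]] := exN Pp qnz.
have kerI := ker_iff ker Pp.
case/idealP: (iJ) => J0 J1 J2.
apply/setP => j; rewrite inE; apply/idP/eqP => [jJ|->] //.
case: (eqVneq j 0) => // jnz; exfalso.
have [r er] := surj j.
have key : forall x, pi0 (q ^+ M * x) \in J.
  case: (q_decomp Pp M.+2 r) => [[k [u [kN uu eru]]] | [y ery]]; last first.
    by exfalso; move/eqP: jnz; apply; rewrite -er ery qM mul0r rmorph0.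
  have kM : (k <= M)%N.
    rewrite leqNgt; apply/negP => kM1.
    have ek : k = M.+1 by apply/eqP; rewrite eqn_leq -ltnS kN kM1.
    subst k.
    move/eqP: jnz; apply; rewrite -er; apply/kerI; split.
      by exists (q ^+ M * u); rewrite eru exprS mulrA.
    by rewrite eru mulrA -exprS qM mul0r.
  move=> x.
  have -> : q ^+ M * x = (q ^+ (M - k) * u^-1 * x) * r.
    rewrite eru -(subnK kM) exprD.
    have uu1 : u^-1 * u = 1 by apply: mulVr.
    rewrite subnK //.
    transitivity (q ^+ (M - k) * q ^+ k * x * (u^-1 * u)); last by ring.
    by rewrite uu1 mulr1.
  by rewrite rmorphM er; apply: J2.
case: M qM qM1 key => [|M] qM qM1 key.
  have /imsetP[k kK e] := subsetP sJ _ (imset_f (fun x => 1 + x) (key (-1))).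
  rewrite expr0 mul1r rmorphN rmorph1 subrr in e.
  case: uK => sK _ _ _; move/subsetP: sK => /(_ k kK); rewrite inE => ku.
  by have := rmorph_unit pi0 ku; rewrite -e unitr0.
have inK : forall x, 1 + q ^+ M.+2 * x \in K.
  move=> x.
  have /imsetP[k kK e] := subsetP sJ _ (imset_f (fun x => 1 + x) (key x)).
  have : pi0 (k - 1 - q ^+ M.+1 * x) = 0 by rewrite !rmorphB rmorph1 -e; ring.
  move/kerI => [[e0 ed] qd].
  pose b := q ^+ M.+1 * x + q * e0.
  have kb : k = 1 + b by rewrite /b -ed; ring.
  have q2e : q ^+ 2 * e0 = 0 by rewrite expr2 -mulrA -ed.
  pose Q := q ^+ M.
  have qM' : Q * q ^+ 3 = 0 by rewrite /Q -exprD addn3.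
  have bE : b = q * (Q * x + e0) by rewrite /b /Q exprSr; ring.
  have b3 : b ^+ 3 = 0.
    have -> : b ^+ 3 = (Q * q ^+ 3) * (Q ^+ 2 * x ^+ 3) +
       (q ^+ 2 * e0) * (q * (3%:R * Q ^+ 2 * x ^+ 2 + 3%:R * Q * x * e0 + e0 ^+ 2)).
      by rewrite bE; ring.
    by rewrite qM' q2e !mul0r addr0.
  have qb2 : q * b ^+ 2 = 0.
    have -> : q * b ^+ 2 = (Q * q ^+ 3) * (Q * x ^+ 2) +
       (q ^+ 2 * e0) * (q * (2%:R * Q * x + e0)).
      by rewrite bE; ring.
    by rewrite qM' q2e !mul0r addr0.
  have qb : q * b = q ^+ M.+2 * x.
    have -> : q * b = q ^+ M.+2 * x + q ^+ 2 * e0 by rewrite bE /Q !exprSr; ring.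
    by rewrite q2e addr0.
  have p2 : (2 < p)%N.
    case: Pp => pp op _ _; rewrite ltn_neqAle prime_gt1 // andbT.
    by apply/eqP => e2; move: op; rewrite -e2.
  have /dvdnP [t et] : (p %| 'C(p, 2))%N by apply: prime_dvd_bin; case: Pp.
  have := usub_exp p uK kK.
  by rewrite kb (binom_cube p b3) et natrM -mulrA qb2 mulr0 addr0 qb.
have := pK _ (aR_ideal (q ^+ M.+2)).
have sub : [set 1 + x | x in [set q ^+ M.+2 * x | x in R]] \subset K.
  by apply/subsetP => y /imsetP[z /imsetP[x _ ->] ->].
move=> /(_ sub) e; move/negP: qM1; apply.
have : q ^+ M.+2 * 1 \in [set q ^+ M.+2 * x | x in R] by apply: imset_f.
by rewrite e mulr1 inE.
Qed.

End Pure.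

Lemma main_ind n : forall (R : finComUnitRingType) p (K : {set R}),
  (#|R| < n)%N -> Pr R p -> is_unit_subgroup K -> pure K -> strongly_pure K.
Proof.
elim: n => [//|n IH] R p K hc Pp uK pK.
apply: StronglyPure => //.
case: (eqVneq (p%:R : R) 0) => [q0|qnz].
  left => x xnz; case: Pp => _ _ _ /(_ x) [//|[y e]].
  by move: xnz; rewrite e q0 mul0r eqxx.
right => S pi0 surj ker.
apply: (IH S p).
- by rewrite -ltnS; apply: leq_trans hc; apply: (card_image_lt surj ker Pp qnz).
- exact: (P_image surj ker Pp).
- exact: usub_image.
- exact: (pure_image surj ker Pp qnz uK pK).
Qed.

Theorem theorem6p6 (R : finComUnitRingType) (c : nat) (K : {set R}) :
  is_galois_ring R -> has_char R c -> odd c ->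
  is_unit_subgroup K -> pure K -> strongly_pure K.
Proof.
move=> G hc oc uK pK; have [p Pp] := galois_P G hc oc.
exact: (main_ind (ltnSn #|R|) Pp uK pK).
Qed.
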